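(* Let $G=(V,E)$ be a weighted undirected graph with $n$ labeled vertices and let $k\ge1$. The running time of Algorithm 1 (described in the context), with $Q$ implemented as a Fibonacci heap, is $O(k|E|+N_p\log|V|)$, where $N_p$ is the total number of pop-minimum operations, and $N_p\le\min\{n|V|,k|E|\}$.
   Context: Fibonacci heap: insert and decrease-key cost $O(1)$ amortized, pop-minimum costs $O(\log|Q|)$. Algorithm 1: input an undirected graph with non-negative weights $w$, a set $\mathcal L\subseteq V$ of labeled vertices ($|\mathcal L|=n$) and $k$. It maintains a min-priority queue $Q$ of pairs $(\mathrm{seed},v)\in\mathcal L\times V$ with priorities, and for each $v\in V$ a list kNN$[v]$ (initially empty) and a set $S_v$ (initially empty). Initially, for each $s\in\mathcal L$, $(s,s)$ is inserted with priority $0$. While $Q$ is nonempty: pop the pair $(\mathrm{seed},v_0)$ of minimum priority $\mathrm{dist}$; add $\mathrm{seed}$ to $S_{v_0}$; if kNN$[v_0]$ has fewer than $k$ entries, append $(\mathrm{dist},\mathrm{seed})$ to kNN$[v_0]$ and, for every neighbour $v$ of $v_0$ such that kNN$[v]$ has fewer than $k$ entries and $\mathrm{seed}\notin S_v$, perform decrease-or-insert of $(\mathrm{seed},v)$ with priority $\mathrm{dist}+w(v_0,v)$ (lower its priority if present in $Q$, otherwise insert).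
   Formalization: The bound on pop-minimum operations is $N_p\le\min\{n|V|,n+2k|E|\}$ instead of $N_p\le\min\{n|V|,k|E|\}$, and the running time charges nothing for initialising the lists kNN$[v]$ and sets $S_v$ of all vertices. The statement above fails without it. *)

(* Defs.v *)
(* Model of Algorithm 1 (multi-seed k-nearest-labeled-vertices
   Dijkstra) with an abstract priority queue charged with the Fibonacci-heap
   amortized costs: insert / decrease-key = 1, pop-min = 1 + log2 |Q|. *)
From mathcomp Require Import all_boot all_order all_algebra.
Set Implicit Arguments. Unset Strict Implicit. Unset Printing Implicit Defensive.
Import Order.TTheory GRing.Theory Num.Theory.

Section Alg.
Variables (R : realDomainType) (T : finType) (e : rel T) (w : T -> T -> R)
          (k : nat).

(* Q maps a pair (seed, v) to its priority if the pair is in the queue. *)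
Record state := State {
  Q   : {ffun T * T -> option R};
  kNN : {ffun T -> seq (R * T)};
  S   : {ffun T -> {set T}} }.

Definition qsize (st : state) : nat := #|[set p : T * T | Q st p]|.

Definition init (L : {set T}) : state :=
  State [ffun p : T * T => if (p.1 == p.2) && (p.1 \in L) then Some 0%R else None]
        [ffun _ => [::]] [ffun _ => set0].

Definition is_min (st : state) (p : T * T) (d : R) : Prop :=
  Q st p = Some d /\ forall p' d', Q st p' = Some d' -> (d <= d')%R.

Definition dec_or_ins (o : option R) (d : R) : option R :=
  if o is Some d0 then Some (Num.min d0 d) else Some d.

(* One iteration of the while loop, after popping (seed,v0) with priority d:
   the new state and the cost of the iteration. *)
Definition next (st : state) (seed v0 : T) (d : R) : state * nat :=
  let S' := [ffun v => if v == v0 then seed |: S st v else S st v] in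
  let popcost := 1 + trunc_log 2 (qsize st) in
  if size (kNN st v0) < k then
    let kNN' := [ffun v => if v == v0 then rcons (kNN st v) (d, seed)
                           else kNN st v] in
    let active v := [&& e v0 v, size (kNN' v) < k & seed \notin S' v] in
    let Q' := [ffun p : T * T => if p == (seed, v0) then None
                 else if (p.1 == seed) && active p.2
                      then dec_or_ins (Q st p) (d + w v0 p.2)%R
                      else Q st p] in
    (State Q' kNN' S',
     popcost + #|[set v | e v0 v]| + #|[set v | active v]|)
  else
    (State [ffun p => if p == (seed, v0) then None else Q st p] (kNN st) S',
     popcost).

(* run st c np : starting from st, the loop terminates (Q empty) after np
   pop-minimum operations, with total cost c; any minimum may be popped. *)
Inductive run : state -> nat -> nat -> Prop :=
| run_stop st : qsize st = 0 -> run st 0 0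
| run_pop st seed v0 d c np :
    is_min st (seed, v0) d ->
    run (next st seed v0 d).1 c np ->
    run st ((next st seed v0 d).2 + c) np.+1.

End Alg.

Definition edges (T : finType) (e : rel T) : {set {set T}} :=
  [set [set p.1; p.2] | p in [set p : T * T | e p.1 p.2]].

(* Main.v *)
Require Import Defs.
From mathcomp Require Import all_boot all_order all_algebra.
From mathcomp Require Import zify.
Import Order.TTheory GRing.Theory Num.Theory.
Set Implicit Arguments. Unset Strict Implicit. Unset Printing Implicit Defensive.

Section P.
Variables (R : realDomainType) (T : finType) (e : rel T) (w : T -> T -> R) (k : nat) (L : {set T}).

Local Notation nxt := (Defs.next e w k).
Local Notation state := (state R T).

Definition deg v := #|[set u | e v u]|.
Definition Bud (st : state) := \sum_v (k - size (kNN st v)) * deg v.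
Definition Inv (st : state) := forall p, Q st p -> (p.1 \in L) && (p.1 \notin S st p.2).
Definition Msr (st : state) := #|[set p : T * T | (p.1 \in L) && (p.1 \notin S st p.2)]|.

Lemma qsize_le (st : state) : qsize st <= #|T| * #|T|.
Proof. by rewrite /qsize -card_prod max_card. Qed.

Lemma step_q (st : state) seed v0 d : Q st (seed, v0) = Some d ->
  qsize st <= (qsize (nxt st seed v0 d).1).+1.
Proof.
move=> hQ; rewrite /qsize -add1n.
apply: leq_trans (_ : #|(seed, v0) |: [set p | Q (nxt st seed v0 d).1 p]| <= _).
  apply: subset_leq_card; apply/subsetP => p; rewrite !inE => hp.
  case: (eqVneq p (seed, v0)) => //= hne.
  rewrite /Defs.next; case: ifP => _ /=; rewrite ffunE (negbTE hne) //.
  by case: ifP => // _; case: (Q st p).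
by rewrite cardsU1; case: (_ \in _).
Qed.

Lemma Bud_step (st st' : state) v0 x : size (kNN st v0) < k ->
  (forall v, kNN st' v = if v == v0 then rcons (kNN st v) x else kNN st v) ->
  Bud st' + deg v0 = Bud st.
Proof.
move=> hk hN; rewrite /Bud (bigD1 v0) //= [in RHS](bigD1 v0) //= hN eqxx size_rcons.
rewrite -addnA [X in _ + X = _]addnC addnA; congr (_ + _).
  rewrite -[X in _ + X]mul1n -mulnDl; congr (_ * _); lia.
by apply: eq_bigr => v hv; rewrite hN (negbTE hv).
Qed.

Lemma step_Bq (st : state) seed v0 d : Q st (seed, v0) = Some d ->
  (qsize (nxt st seed v0 d).1).+1 + Bud (nxt st seed v0 d).1 <= qsize st + Bud st.
Proof.
move=> hQ; have hin : (seed, v0) \in [set p | Q st p] by rewrite inE hQ.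
rewrite /Defs.next; case: ifP => hk /=.
  set st' := State _ _ _.
  rewrite /qsize (cardsD1 (seed, v0) [set p | Q st p]) hin add1n.
  pose act := [set v | [&& e v0 v, size (kNN st' v) < k & seed \notin S st' v]].
  have hB : Bud st' + deg v0 = Bud st.
    by apply: Bud_step hk _ => v; rewrite /st' /= ffunE.
  have hact : #|act| <= deg v0.
    apply: subset_leq_card; apply/subsetP => v; rewrite !inE.
    by case/and3P.
  have hq : #|[set p | Q st' p]| <= #|[set p | Q st p] :\ (seed, v0)| + #|act|.
    apply: leq_trans (_ : #|([set p | Q st p] :\ (seed, v0)) :|: [set (seed, v) | v in act]| <= _).
      apply: subset_leq_card; apply/subsetP => p; rewrite /st' /= !inE ffunE.
      case: ifP => //= hne; case: ifP => [/andP[/eqP h1 h2] _|_ hp]; last by rewrite hp.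
      apply/orP; right; apply/imsetP; exists p.2; first by rewrite inE.
      by case: p h1 {hne h2} => /= a b ->.
    apply: leq_trans (leq_card_setU _ _) _.
    by rewrite leq_add2l leq_imset_card.
  rewrite -hB.
  apply: leq_trans (_ : (#|[set p | Q st p] :\ (seed, v0)| + #|act|).+1 + Bud st' <= _).
    by rewrite leq_add2r ltnS.
  by rewrite addSn -addnA [X in _ <= X]addSn ltnS leq_add2l addnC leq_add2l.
set st' := State _ _ _.
rewrite /qsize (cardsD1 (seed, v0) [set p | Q st p]) hin add1n.
have -> : Bud st' = Bud st by [].
rewrite leq_add2r ltnS; apply: subset_leq_card; apply/subsetP => p.
by rewrite !inE /st' /= ffunE; case: ifP.
Qed.

Lemma step_cost (st : state) seed v0 d :
  (nxt st seed v0 d).2 + 2 * Bud (nxt st seed v0 d).1 <=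
  (1 + trunc_log 2 (#|T| * #|T|)) + 2 * Bud st.
Proof.
have hlog : trunc_log 2 (qsize st) <= trunc_log 2 (#|T| * #|T|).
  exact/leq_trunc_log/qsize_le.
rewrite /Defs.next; case: ifP => hk /=.
  set st' := State _ _ _.
  pose act := [set v | [&& e v0 v, size (kNN st' v) < k & seed \notin S st' v]].
  have hB : Bud st' + deg v0 = Bud st.
    by apply: Bud_step hk _ => v; rewrite /st' /= ffunE.
  have hact : #|act| <= deg v0.
    apply: subset_leq_card; apply/subsetP => v; rewrite !inE.
    by case/and3P.
  rewrite -hB; move: hact hlog; rewrite /deg /act /st' /=.
  move: (#|_|) => a; move: (#|_|) => b; move: (trunc_log _ _) => t1.
  move: (trunc_log _ _) => t2; move: (Bud _) => c; lia.
by rewrite leq_add2r add1n ltnS.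
Qed.

Lemma run_q (st : state) c np : run e w k st c np -> qsize st <= np.
Proof.
elim=> {st c np} [st -> //|st seed v0 d c np [hQ _] _ IH].
exact: leq_trans (step_q hQ) _.
Qed.

Lemma run_B (st : state) c np : run e w k st c np -> np <= qsize st + Bud st.
Proof.
elim=> {st c np} [st -> //|st seed v0 d c np [hQ _] _ IH].
exact: leq_trans _ (step_Bq hQ).
Qed.

Lemma run_cost (st : state) c np : run e w k st c np ->
  c <= np * (1 + trunc_log 2 (#|T| * #|T|)) + 2 * Bud st.
Proof.
elim=> {st c np} [st _ //|st seed v0 d c np [hQ _] _ IH].
have := step_cost st seed v0 d; rewrite mulSn; lia.
Qed.

Lemma notS' (st : state) seed v0 (p : T * T) : p != (seed, v0) -> p.1 \notin S st p.2 ->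
  p.1 \notin [ffun v => if v == v0 then seed |: S st v else S st v] p.2.
Proof.
case: p => a b /= hne hn; rewrite ffunE; case: eqVneq => [eb|//].
rewrite in_setU1 negb_or hn andbT; apply: contra hne => /eqP ->; by rewrite eb.
Qed.

Lemma inv_next (st : state) seed v0 d : Inv st -> Q st (seed, v0) = Some d ->
  Inv (nxt st seed v0 d).1.
Proof.
move=> hI hQ; have := hI (seed, v0); rewrite hQ => /(_ isT) /andP[hL hS] p.
rewrite /Defs.next; case: ifP => hk /= hp; rewrite ffunE in hp; case: eqVneq hp => // hne.
  case: ifP => [/and4P[/eqP -> _ _ ->] _|_ hp]; first by rewrite hL.
  by case/andP: (hI p hp) => -> /(notS' hne).
by move=> hp; case/andP: (hI p hp) => -> /(notS' hne).
Qed.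

Lemma M_next (st : state) seed v0 d : Inv st -> Q st (seed, v0) = Some d ->
  Msr (nxt st seed v0 d).1 < Msr st.
Proof.
move=> hI hQ; have := hI (seed, v0); rewrite hQ => /(_ isT) /andP[hL hS].
rewrite /Msr.
have -> : S (nxt st seed v0 d).1 = [ffun v => if v == v0 then seed |: S st v else S st v].
  by rewrite /Defs.next; case: ifP.
apply: proper_card; apply/properP; split.
  apply/subsetP => p; rewrite !inE ffunE => /andP[-> /=]; case: ifP => // _.
  by rewrite in_setU1 negb_or => /andP[].
exists (seed, v0); first by rewrite inE hL.
by rewrite inE /= ffunE eqxx setU11 andbF.
Qed.

Lemma run_M (st : state) c np : Inv st -> run e w k st c np -> np <= Msr st.
Proof.
move=> hI h; elim: h hI => {st c np} [st _ //|st seed v0 d c np [hQ _] _ IH] hI.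
exact: leq_ltn_trans (IH (inv_next hI hQ)) (M_next hI hQ).
Qed.

Lemma min_seq (st : state) (s : seq (T * T)) : has (fun p => Q st p) s ->
  exists p d, Q st p = Some d /\ forall p' d', p' \in s -> Q st p' = Some d' -> (d <= d')%R.
Proof.
elim: s => [//|a s IH] /=.
case ha: (Q st a) => [da|] /=; last first.
  move/IH => [p [d [hp hm]]]; exists p, d; split => // p' d'.
  rewrite in_cons => /orP[/eqP ->|hin]; first by rewrite ha.
  exact: hm.
case hs: (has _ s).
  have [p [d [hp hm]]] := IH hs.
  case/orP: (le_total da d) => hle.
    exists a, da; split => // p' d'; rewrite in_cons => /orP[/eqP ->|hin h'].
      by rewrite ha => -[<-].
    exact: le_trans hle (hm _ _ hin h').
  exists p, d; split => // p' d'; rewrite in_cons => /orP[/eqP ->|hin h'].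
    by rewrite ha => -[<-].
  exact: hm _ _ hin h'.
move=> _; exists a, da; split => // p' d'; rewrite in_cons => /orP[/eqP ->|hin].
  by rewrite ha => -[<-].
move/negbT: hs => /hasPn /(_ _ hin); by case: (Q st p').
Qed.

Lemma exists_min (st : state) : qsize st != 0 -> exists p d, is_min st p d.
Proof.
rewrite /qsize cards_eq0 => /set0Pn [p0]; rewrite inE => hp0.
have [|p [d [hp hm]]] := @min_seq st (enum [set: T * T]).
  by apply/hasP; exists p0; rewrite ?mem_enum ?inE.
exists p, d; split => // p' d'; apply: hm; by rewrite mem_enum inE.
Qed.

Lemma run_exists n (st : state) : Msr st < n -> Inv st -> exists c np, run e w k st c np.
Proof.
elim: n st => [//|n IH] st hM hI.
case: (eqVneq (qsize st) 0) => [h0|hne]; first by exists 0, 0; constructor.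
have [[seed v0] [d hmin]] := exists_min hne.
have hQ := hmin.1.
have [c [np hr]] := IH _ (leq_trans (M_next hI hQ) hM) (inv_next hI hQ).
by exists ((nxt st seed v0 d).2 + c), np.+1; apply: run_pop hmin hr.
Qed.

Lemma inv_init : Inv (init R L).
Proof. by move=> [a b]; rewrite /= !ffunE in_set0 andbT; case: ifP => // /andP[_ ->]. Qed.

Lemma qsize_init : qsize (init R L) = #|L|.
Proof.
rewrite /qsize -(card_imset (mem L) (f := fun x => (x, x))); last by move=> x y [].
apply: eq_card => -[a b]; rewrite !inE ffunE /=.
apply/idP/imsetP => [|[x hx [-> ->]]]; last by rewrite eqxx hx.
by case: ifP => // /andP[/eqP <- ha] _; exists a.
Qed.

Lemma Msr_init : Msr (init R L) <= #|L| * #|T|.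
Proof.
rewrite /Msr -cardsT -cardsX; apply: subset_leq_card; apply/subsetP => -[a b].
by rewrite !inE /= => /andP[-> _].
Qed.

Lemma Bud_init : Bud (init R L) = k * #|[set p : T * T | e p.1 p.2]|.
Proof.
rewrite /Bud /= (eq_bigr (fun v => k * deg v)); last by move=> v _; rewrite ffunE subn0.
rewrite -big_distrr /=; congr (_ * _).
rewrite -sum1_card (eq_bigr (fun v => \sum_(u | e v u) 1)); last first.
  by move=> v _; rewrite /deg -sum1_card; apply: eq_bigl => u; rewrite inE.
rewrite (pair_big_dep predT (fun v u => e v u) (fun _ _ => 1)) /=.
by apply: eq_bigl => p; rewrite inE.
Qed.
End P.

Section E.
Variables (T : finType) (e : rel T).
Hypothesis irr : irreflexive e.

Lemma half (cmp : rel T) : (forall a b, cmp a b -> ~~ cmp b a) ->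
  #|[set p : T * T | e p.1 p.2 && cmp p.1 p.2]| <= #|edges e|.
Proof.
move=> asym.
rewrite -(@card_in_imset _ _ (fun p : T * T => [set p.1; p.2])).
  apply: subset_leq_card; apply: imsetS; apply/subsetP => p; rewrite !inE.
  by case/andP.
move=> [a b] [c d]; rewrite !inE /= => /andP[eab cab] /andP[ecd ccd] h.
have a_in : a \in [set c; d] by rewrite -h set21.
have b_in : b \in [set c; d] by rewrite -h set22.
have c_in : c \in [set a; b] by rewrite h set21.
move: a_in b_in c_in; rewrite !inE => /orP[/eqP ea|/eqP ea] /orP[/eqP eb|/eqP eb] /orP[/eqP ec|/eqP ec];
  subst => //; try (by rewrite irr in eab); try (by rewrite irr in ecd);
  try (by move: (asym _ _ cab); rewrite ccd).

Qed.

Lemma dir_edges : #|[set p : T * T | e p.1 p.2]| <= 2 * #|edges e|.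
Proof.
apply: leq_trans (_ : #|[set p : T * T | e p.1 p.2 && (enum_rank p.1 < enum_rank p.2)] :|:
                       [set p : T * T | e p.1 p.2 && (enum_rank p.2 < enum_rank p.1)]| <= _).
  apply: subset_leq_card; apply/subsetP => -[a b]; rewrite !inE /= => eab; rewrite eab /=.
  case: ltngtP => // /val_inj /enum_rank_inj eq; by rewrite eq irr in eab.
apply: leq_trans (leq_card_setU _ _) _; rewrite mul2n -addnn leq_add //.
  by apply: (half (cmp := fun a b : T => enum_rank a < enum_rank b)) => a b h; rewrite -leqNgt ltnW.
by apply: (half (cmp := fun a b : T => enum_rank b < enum_rank a)) => a b h; rewrite -leqNgt ltnW.
Qed.
End E.

Lemma tlog_sq n : trunc_log 2 (n * n) <= (trunc_log 2 n).*2.+1.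
Proof.
case: n => [|n]; first by rewrite trunc_log0.
have h1 := trunc_log_ltn n.+1 (isT : 1 < 2).
have h2 := @trunc_logP 2 (n.+1 * n.+1) isT (muln_gt0 _ _).
rewrite -ltnS -(ltn_exp2l _ _ (isT : 1 < 2)).
apply: leq_ltn_trans h2 _.
have -> : (trunc_log 2 n.+1).*2.+2 = (trunc_log 2 n.+1).+1 + (trunc_log 2 n.+1).+1.
  by rewrite addSn addnS addnn.
rewrite expnD; exact (ltn_mul h1 h1).
Qed.

Lemma tlog_ge1 n : 2 <= n -> 1 <= trunc_log 2 n.
Proof.
move=> hn; case: (posnP (trunc_log 2 n)) => // h0.
by have := trunc_log_ltn n (isT : 1 < 2); rewrite h0 expn1 ltnNge hn.
Qed.

Theorem theoremB2 :
  exists C : nat,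
  forall (R : realDomainType) (T : finType) (e : rel T) (w : T -> T -> R)
         (L : {set T}) (k : nat),
    irreflexive e -> symmetric e ->
    (forall x y, e x y -> w x y = w y x) ->
    (forall x y, e x y -> (0 <= w x y)%R) ->
    1 <= k ->
    (exists c np, run e w k (init R L) c np) /\
    (forall c np, run e w k (init R L) c np ->
       #|L| + c <= C * (k * #|edges e| + np * trunc_log 2 #|T| + 1) /\
       np <= minn (#|L| * #|T|) (#|L| + 2 * k * #|edges e|)).
Proof.
exists 5 => R T e w L k irr _ _ _ _; split.
  exact: (run_exists e w k (n := (Msr L (init R L)).+1) (leqnn _) (@inv_init R T L)).
move=> c np hr.
have hM := leq_trans (run_M (@inv_init R T L) hr) (Msr_init R L).
have hL : #|L| <= np by rewrite -(qsize_init R L); exact: run_q hr.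
have hD := dir_edges irr.
have hB : np <= #|L| + 2 * k * #|edges e|.
  apply: leq_trans (run_B hr) _; rewrite qsize_init Bud_init leq_add2l -mulnA mulnCA.
  by rewrite leq_mul2l hD orbT.
have hc := run_cost hr; rewrite Bud_init in hc.
have hLT := leq_trans (leq_trunc_log 2 (leqnn (#|T| * #|T|))) (tlog_sq #|T|).
have hnp : np <= np * trunc_log 2 #|T| + 1.
  case: (leqP 2 #|T|) => hT.
    by apply: leq_trans (leq_addr _ _); rewrite -{1}(muln1 np) leq_mul2l tlog_ge1 // orbT.
  apply: leq_trans (leq_addl _ _); apply: leq_trans hM _.
  apply: leq_trans (leq_mul (max_card (mem L)) (leqnn _)) _; nia.
split; last by rewrite leq_min hM hB.
have hc2 : c <= np * (trunc_log 2 #|T|).*2 + 2 * np + 4 * (k * #|edges e|).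
  apply: leq_trans hc _.
  have h0 : 1 + trunc_log 2 (#|T| * #|T|) <= (trunc_log 2 #|T|).*2 + 2.
    by rewrite add1n addn2 ltnS.
  have h1 := leq_mul (leqnn np) h0.
  nia.
nia.
Qed.
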